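(* Let $S$ be an inverse semigroup, regarded as an algebraic structure in the language $\mathcal{L}=\{\cdot,{}^{-1}\}\cup\{s\mid s\in S\}$. Suppose $S$ contains two idempotents $e,f$ that are incomparable with respect to the natural order on idempotents (i.e. $ef\neq e$ and $fe\neq f$). Then $S$ is not an equational domain in the language $\mathcal{L}$.
   Context: A semigroup $S$ is inverse if for every $s\in S$ there is a unique $s^{-1}\in S$ with $ss^{-1}s=s$ and $s^{-1}ss^{-1}=s^{-1}$; its idempotents commute. The natural order on idempotents is $e\le f \iff ef=e$. The language $\mathcal{L}$ consists of multiplication, inversion, and a constant symbol for every element of $S$. For variables $x_1,\dots,x_n$, a term of $\mathcal{L}$ is a finite product of variables raised to integer powers and constants from $S$. An equation is an equality of two terms; a system of equations is an arbitrary set of equations in $x_1,\dots,x_n$. A set $Y\subseteq S^n$ is algebraic over $S$ if it is the set of all tuples in $S^n$ satisfying all equations of some system. $S$ is an equational domain (in $\mathcal{L}$) if for every $n$, every finite union of algebraic subsets of $S^n$ is algebraic. *)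

(* Defs.v *)
From mathcomp Require Import all_boot.
From Stdlib Require Import List.

Set Implicit Arguments.
Unset Strict Implicit.

Definition is_inverse_semigroup (S : Type) (mul : S -> S -> S) (inv : S -> S) : Prop :=
  (forall a b c, mul a (mul b c) = mul (mul a b) c) /\
  (forall s, mul (mul s (inv s)) s = s /\ mul (mul (inv s) s) (inv s) = inv s) /\
  (forall s t, mul (mul s t) s = s -> mul (mul t s) t = t -> t = inv s).

Inductive term (S : Type) (n : nat) : Type :=
| TVar : 'I_n -> term S n
| TConst : S -> term S n
| TMul : term S n -> term S n -> term S n
| TInv : term S n -> term S n.

Fixpoint eval (S : Type) (mul : S -> S -> S) (inv : S -> S) (n : nat)
  (x : 'I_n -> S) (t : term S n) : S :=
  match t with
  | TVar i => x i
  | TConst s => s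
  | TMul t1 t2 => mul (eval mul inv x t1) (eval mul inv x t2)
  | TInv t1 => inv (eval mul inv x t1)
  end.

Definition equation (S : Type) (n : nat) : Type := (term S n * term S n)%type.

Definition algebraic (S : Type) (mul : S -> S -> S) (inv : S -> S) (n : nat)
  (Y : ('I_n -> S) -> Prop) : Prop :=
  exists E : equation S n -> Prop,
    forall x : 'I_n -> S,
      Y x <-> (forall q, E q -> eval mul inv x q.1 = eval mul inv x q.2).

Definition equational_domain (S : Type) (mul : S -> S -> S) (inv : S -> S) : Prop :=
  forall (n : nat) (Ys : list (('I_n -> S) -> Prop)),
    (forall Y, In Y Ys -> algebraic mul inv Y) ->
    algebraic mul inv (fun x => exists Y, In Y Ys /\ Y x).

(* Main.v *)
Require Import Defs.
From mathcomp Require Import all_boot.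
From Stdlib Require Import List.
From Stdlib Require Import Setoid.
Set Implicit Arguments.
Unset Strict Implicit.

Lemma isg_inv_idem (S : Type) (mul : S -> S -> S) (inv : S -> S) :
  is_inverse_semigroup mul inv -> forall e, mul e e = e -> inv e = e.
Proof.
move=> [A [D U]] e He. symmetry; apply: U; by rewrite !He.
Qed.

Lemma isg_invK (S : Type) (mul : S -> S -> S) (inv : S -> S) :
  is_inverse_semigroup mul inv -> forall a, inv (inv a) = a.
Proof.
move=> [A [D U]] a. symmetry; apply: U; [exact: (proj2 (D a)) | exact: (proj1 (D a))].
Qed.

Lemma idemR (S : Type) (mul : S -> S -> S) (inv : S -> S) :
  is_inverse_semigroup mul inv -> forall e, mul e e = e -> forall z, mul e (mul e z) = mul e z.
Proof. by move=> [A _] e He z; rewrite A He. Qed.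

Lemma isg_idem_mul (S : Type) (mul : S -> S -> S) (inv : S -> S) :
  is_inverse_semigroup mul inv -> forall e f, mul e e = e -> mul f f = f ->
  mul (mul e f) (mul e f) = mul e f.
Proof.
move=> H e f He Hf. have H' := H. move: H' => [A [D U]].
have eR := idemR H He. have fR := idemR H Hf.
set a := mul e f.
have D1 := proj1 (D a). have D2 := proj2 (D a).
rewrite /a -!A in D1 D2.
have D2z := fun z => f_equal (fun t => mul t z) D2. simpl in D2z.
repeat setoid_rewrite <- A in D2z.
have Hx: mul f (mul (inv a) e) = inv a.
  apply: U; rewrite /a -!A.
  - by rewrite fR eR.
  - by rewrite fR eR D2z.
have Hxx: mul (inv a) (inv a) = inv a.
  rewrite -{1}Hx. rewrite -{2}Hx /a -!A D2z. by rewrite Hx.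
have : inv (inv a) = inv a by apply: (isg_inv_idem H).
rewrite (isg_invK H) => Ha. by rewrite {1 2}Ha Hxx -Ha.
Qed.


Lemma isg_commR (S : Type) (mul : S -> S -> S) (inv : S -> S) :
  is_inverse_semigroup mul inv -> forall e f, mul e e = e -> mul f f = f ->
  mul e f = mul f e.
Proof.
move=> H e f He Hf. have H' := H. move: H' => [A [D U]].
have eR := idemR H He. have fR := idemR H Hf.
have Hef := isg_idem_mul H He Hf. have Hfe := isg_idem_mul H Hf He.
rewrite -!A in Hef Hfe.
have : mul f e = inv (mul e f).
  apply: U; rewrite -!A.
  - by rewrite fR eR Hef.
  - by rewrite eR fR Hfe.
rewrite (isg_inv_idem H (isg_idem_mul H He Hf)). by move=> ->.
Qed.

Lemma isg_commZ (S : Type) (mul : S -> S -> S) (inv : S -> S) :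
  is_inverse_semigroup mul inv -> forall e f z, mul e e = e -> mul f f = f ->
  mul e (mul f z) = mul f (mul e z).
Proof.
move=> H e f z He Hf. have H' := H. move: H' => [A _].
by rewrite !A (isg_commR H He Hf).
Qed.

Lemma isg_ssi (S : Type) (mul : S -> S -> S) (inv : S -> S) :
  is_inverse_semigroup mul inv -> forall s, mul (mul s (inv s)) (mul s (inv s)) = mul s (inv s).
Proof. move=> [A [D _]] s. by rewrite A (proj1 (D s)). Qed.

Lemma isg_sis (S : Type) (mul : S -> S -> S) (inv : S -> S) :
  is_inverse_semigroup mul inv -> forall s, mul (mul (inv s) s) (mul (inv s) s) = mul (inv s) s.
Proof. move=> [A [D _]] s. by rewrite A (proj2 (D s)). Qed.

Lemma isg_DL (S : Type) (mul : S -> S -> S) (inv : S -> S) :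
  is_inverse_semigroup mul inv -> forall s z, mul s (mul (inv s) (mul s z)) = mul s z.
Proof. move=> [A [D _]] s z. by rewrite !A (proj1 (D s)). Qed.

Lemma isg_DL0 (S : Type) (mul : S -> S -> S) (inv : S -> S) :
  is_inverse_semigroup mul inv -> forall s, mul s (mul (inv s) s) = s.
Proof. move=> [A [D _]] s. by rewrite !A (proj1 (D s)). Qed.

Lemma isg_DR (S : Type) (mul : S -> S -> S) (inv : S -> S) :
  is_inverse_semigroup mul inv -> forall s z, mul (inv s) (mul s (mul (inv s) z)) = mul (inv s) z.
Proof. move=> [A [D _]] s z. by rewrite !A (proj2 (D s)). Qed.

Lemma isg_DR0 (S : Type) (mul : S -> S -> S) (inv : S -> S) :
  is_inverse_semigroup mul inv -> forall s, mul (inv s) (mul s (inv s)) = inv s.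
Proof. move=> [A [D _]] s. by rewrite !A (proj2 (D s)). Qed.

Lemma isg_comm_is (S : Type) (mul : S -> S -> S) (inv : S -> S) :
  is_inverse_semigroup mul inv -> forall a s z, mul a a = a ->
  mul a (mul (inv s) (mul s z)) = mul (inv s) (mul s (mul a z)).
Proof.
move=> H a s z Ha. have H' := H. move: H' => [A _].
rewrite (A (inv s)) (isg_commZ H _ Ha (isg_sis H s)). by rewrite -A.
Qed.

Lemma isg_comm_si (S : Type) (mul : S -> S -> S) (inv : S -> S) :
  is_inverse_semigroup mul inv -> forall a s z, mul a a = a ->
  mul a (mul s (mul (inv s) z)) = mul s (mul (inv s) (mul a z)).
Proof.
move=> H a s z Ha. have H' := H. move: H' => [A _].
rewrite (A s) (isg_commZ H _ Ha (isg_ssi H s)). by rewrite -A.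
Qed.

Lemma isg_swap (S : Type) (mul : S -> S -> S) (inv : S -> S) :
  is_inverse_semigroup mul inv -> forall s t z,
  mul s (mul (inv s) (mul (inv t) (mul t z))) = mul (inv t) (mul t (mul s (mul (inv s) z))).
Proof.
move=> H s t z. have H' := H. move: H' => [A _].
by rewrite (A s) (isg_comm_is H _ _ (isg_ssi H s)) -A.
Qed.

Lemma isg_inv_mul (S : Type) (mul : S -> S -> S) (inv : S -> S) :
  is_inverse_semigroup mul inv -> forall x y, inv (mul x y) = mul (inv y) (inv x).
Proof.
move=> H x y. have H' := H. move: H' => [A [D U]].
symmetry; apply: U; rewrite -!A.
- by rewrite (isg_swap H) (isg_DL H) (isg_DL0 H).
- by rewrite -(isg_swap H) (isg_DR H) (isg_DR0 H).
Qed.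

Definition conj (S : Type) (mul : S -> S -> S) (inv : S -> S) (s a : S) :=
  mul (mul s a) (inv s).

Lemma isg_conj_idem (S : Type) (mul : S -> S -> S) (inv : S -> S) :
  is_inverse_semigroup mul inv -> forall s a, mul a a = a ->
  mul (conj mul inv s a) (conj mul inv s a) = conj mul inv s a.
Proof.
move=> H s a Ha. have H' := H. move: H' => [A _]. rewrite /conj -!A.
by rewrite (isg_comm_is H _ _ Ha) (isg_DL H) (idemR H Ha).
Qed.

Lemma isg_moveZ (S : Type) (mul : S -> S -> S) (inv : S -> S) :
  is_inverse_semigroup mul inv -> forall s a z, mul a a = a ->
  mul (mul s a) z = mul (conj mul inv s a) (mul s z).
Proof.
move=> H s a z Ha. have H' := H. move: H' => [A _]. rewrite /conj -!A.
by rewrite (isg_comm_is H _ _ Ha) (isg_DL H).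
Qed.

Lemma isg_move0 (S : Type) (mul : S -> S -> S) (inv : S -> S) :
  is_inverse_semigroup mul inv -> forall s a, mul a a = a ->
  mul s a = mul (conj mul inv s a) s.
Proof.
move=> H s a Ha. have H' := H. move: H' => [A _]. rewrite /conj -!A.
rewrite (isg_commR H Ha (isg_sis H s)) -A. by rewrite (isg_DL H).
Qed.

Lemma isg_conj_mul (S : Type) (mul : S -> S -> S) (inv : S -> S) :
  is_inverse_semigroup mul inv -> forall s a b, mul a a = a ->
  conj mul inv s (mul a b) = mul (conj mul inv s a) (conj mul inv s b).
Proof.
move=> H s a b Ha. have H' := H. move: H' => [A _]. rewrite /conj -!A.
by rewrite (isg_comm_is H _ _ Ha) (isg_DL H).
Qed.

Definition mo (S : Type) (mul : S -> S -> S) (a : S) (oc : option S) :=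
  match oc with None => a | Some c => mul a c end.

Definition Inv3 (S : Type) (mul : S -> S -> S) (u v w : S) :=
  exists a b oc, mul a a = a /\ mul b b = b /\
    u = mo mul a oc /\ v = mo mul b oc /\ w = mo mul (mul a b) oc.

Lemma Inv3_G (S : Type) (mul : S -> S -> S) (inv : S -> S) :
  is_inverse_semigroup mul inv -> forall u v w, Inv3 mul u v w ->
  w = mul (mul u (inv u)) v.
Proof.
move=> H u v w [a [b [[c|] [Ha [Hb [-> [-> ->]]]]]]]; have H' := H; move: H' => [A _] /=.
- rewrite (isg_inv_mul H) (isg_inv_idem H Ha) -!A.
  by rewrite (isg_comm_si H _ _ Ha) (idemR H Ha) -(isg_comm_si H _ _ Ha) -(isg_comm_si H _ _ Hb) (isg_DL0 H).
- by rewrite (isg_inv_idem H Ha) Ha.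
Qed.

Lemma Inv3_mul (S : Type) (mul : S -> S -> S) (inv : S -> S) :
  is_inverse_semigroup mul inv -> forall u1 v1 w1 u2 v2 w2,
  Inv3 mul u1 v1 w1 -> Inv3 mul u2 v2 w2 -> Inv3 mul (mul u1 u2) (mul v1 v2) (mul w1 w2).
Proof.
move=> H u1 v1 w1 u2 v2 w2 [a1 [b1 [o1 [Ha1 [Hb1 [-> [-> ->]]]]]]]
  [a2 [b2 [o2 [Ha2 [Hb2 [-> [-> ->]]]]]]]; have H' := H; move: H' => [A _].
have mo_mul : forall x y o, mul x (mo mul y o) = mo mul (mul x y) o.
  by move=> x y [o|] //=; rewrite A.
have mo_Some : forall x c y o, mul y y = y ->
    mul (mul x c) (mo mul y o) = mo mul (mul x (conj mul inv c y)) (Some (mo mul c o)).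
  move=> x c y [o|] Hy /=; rewrite -!A.
  - by rewrite (A c) (isg_moveZ H _ _ Hy) -!A.
  - by rewrite (isg_move0 H c Hy) -!A.
case: o1 => [c|] /=.
- exists (mul a1 (conj mul inv c a2)), (mul b1 (conj mul inv c b2)),
    (Some (mo mul c o2)).
  have Ca := isg_conj_idem H c Ha2. have Cb := isg_conj_idem H c Hb2.
  have T1 := isg_idem_mul H Ha1 Ca. have T2 := isg_idem_mul H Hb1 Cb.
  have T3 := mo_Some a1 c a2 o2 Ha2. have T4 := mo_Some b1 c b2 o2 Hb2.
  do 4! (split; first by []).
  rewrite (mo_Some _ _ _ _ (isg_idem_mul H Ha2 Hb2)).
  rewrite (isg_conj_mul H _ _ Ha2). congr (mo mul _ _).
  move: (conj mul inv c a2) (conj mul inv c b2) Ca Cb => X Y CX CY.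
  by rewrite -!A (isg_commZ H _ Hb1 CX).
- exists (mul a1 a2), (mul b1 b2), o2.
  have T1 := isg_idem_mul H Ha1 Ha2. have T2 := isg_idem_mul H Hb1 Hb2.
  do 2! (split; first by []).
  rewrite !mo_mul; split => //; split => //. congr (mo mul _ _).
  by rewrite -!A (isg_commZ H _ Hb1 Ha2).
Qed.

Lemma Inv3_inv (S : Type) (mul : S -> S -> S) (inv : S -> S) :
  is_inverse_semigroup mul inv -> forall u v w,
  Inv3 mul u v w -> Inv3 mul (inv u) (inv v) (inv w).
Proof.
move=> H u v w [a [b [[c|] [Ha [Hb [-> [-> ->]]]]]]]; have H' := H; move: H' => [A _] /=.
- have Hab := isg_idem_mul H Ha Hb.
  exists (conj mul inv (inv c) a), (conj mul inv (inv c) b), (Some (inv c)).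
  have T1 := isg_conj_idem H (inv c) Ha. have T2 := isg_conj_idem H (inv c) Hb.
  do 2! (split; first by []).
  rewrite /= (isg_inv_mul H a) (isg_inv_mul H b) (isg_inv_mul H (mul a b)).
  rewrite (isg_inv_idem H Ha) (isg_inv_idem H Hb) (isg_inv_idem H Hab).
  rewrite -(isg_move0 H _ Ha) -(isg_move0 H _ Hb) -(isg_conj_mul H _ _ Ha).
  by rewrite -(isg_move0 H _ Hab).
- exists a, b, None => /=.
  by rewrite (isg_inv_idem H Ha) (isg_inv_idem H Hb) (isg_inv_idem H (isg_idem_mul H Ha Hb)).
Qed.

Lemma Inv3_eval (S : Type) (mul : S -> S -> S) (inv : S -> S) :
  is_inverse_semigroup mul inv -> forall n (x y z : 'I_n -> S),
  (forall i, Inv3 mul (x i) (y i) (z i)) ->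
  forall t : term S n, Inv3 mul (eval mul inv x t) (eval mul inv y t) (eval mul inv z t).
Proof.
move=> H n x y z Hi; elim => [i|c|t1 IH1 t2 IH2|t1 IH1] /=.
- exact: Hi.
- have Hc := isg_ssi H c. have H' := H. move: H' => [A [D _]].
  exists (mul c (inv c)), (mul c (inv c)), (Some c) => /=.
  by rewrite Hc (proj1 (D c)).
- by have := Inv3_mul H IH1 IH2.
- by have := Inv3_inv H IH1.
Qed.

Theorem lemma3 (S : Type) (mul : S -> S -> S) (inv : S -> S) :
  is_inverse_semigroup mul inv ->
  (exists e f : S, mul e e = e /\ mul f f = f /\ mul e f <> e /\ mul f e <> f) ->
  ~ equational_domain mul inv.
Proof.
move=> H [e [f [He [Hf [Hef Hfe]]]]] ED.
pose Ye : ('I_1 -> S) -> Prop := fun x => x ord0 = e.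
pose Yf : ('I_1 -> S) -> Prop := fun x => x ord0 = f.
have alg1 : forall g, algebraic mul inv (fun x : 'I_1 -> S => x ord0 = g).
  move=> g. exists (fun q => q = (TVar S ord0, TConst 1 g)) => x; split.
  - by move=> Hx q -> /=.
  - by move=> Hx; apply: (Hx _ erefl).
have [E HE] := ED 1 [:: Ye; Yf] (fun Y HY => match HY with
  | or_introl h => eq_ind _ _ (alg1 e) _ h
  | or_intror (or_introl h) => eq_ind _ _ (alg1 f) _ h
  | or_intror (or_intror h) => False_ind _ h end).
pose xe : 'I_1 -> S := fun _ => e.
pose xf : 'I_1 -> S := fun _ => f.
pose xz : 'I_1 -> S := fun _ => mul e f.
have Ke : forall q, E q -> eval mul inv xe q.1 = eval mul inv xe q.2.
  apply/(HE xe). exists Ye; split; [by left | by []].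
have Kf : forall q, E q -> eval mul inv xf q.1 = eval mul inv xf q.2.
  apply/(HE xf). exists Yf; split; [by right; left | by []].
have Hi : forall i, Inv3 mul (xe i) (xf i) (xz i).
  move=> i; exists e, f, None; by rewrite /= He Hf.
have [Y [HY HYz]] : exists Y, In Y [:: Ye; Yf] /\ Y xz.
  apply/(HE xz) => q Hq.
  rewrite (Inv3_G H (Inv3_eval H Hi q.1)) (Inv3_G H (Inv3_eval H Hi q.2)).
  by rewrite (Ke q Hq) (Kf q Hq).
move: HYz; case: HY => [<-|[<-|[]]]; rewrite /Ye /Yf /xz => Hz.
- exact: Hef.
- apply: Hfe. by rewrite -(isg_commR H He Hf).
Qed.
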